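(* Let $T$ be a finite tree, let $k\ge 1$, and let $S=(W_1,\dots,W_k)$ be a covering strategy for $T$ with $k$ robots (at prescribed starting vertices) whose length $l(S)$ is minimum among all such covering strategies. Then for each $i$ the set of edges traversed by $W_i$ can be decomposed into two sets: the edges of a path $P(W_i)$ and the edges of a forest $F(W_i)$ (subgraphs of $T$), such that: (a) each edge of $P(W_i)$ is traversed exactly once by the $i$-th robot; (b) each edge of $F(W_i)$ is traversed exactly twice by the $i$-th robot and is never traversed by any other robot; (c) each connected component $C$ of $F(W_i)$ satisfies $\left|V(C)\cap \bigcup_{r=1}^k V(P(W_r))\right|=1$; (d) for every pair $j\neq l$, $V(F(W_j))\cap V(F(W_l))\subseteq \bigcup_{r=1}^k V(P(W_r))$.
   Context: Model: $T=(V,E)$ is a tree; robots move along edges, one edge per unit time step, or stay put. A walk is a sequence $W=(u_1,\dots,u_m)$ of vertices of $T$ in which consecutive terms are equal or adjacent; the robot following it stays at $u_m$ afterwards. The time of $W$ is $t(W)=m-1$; the length $l(W)$ is the number of indices $i\in\{1,\dots,m-1\}$ with $u_i\neq u_{i+1}$ (i.e. the number of edge traversals, counted with multiplicity). A strategy with $k$ robots is a $k$-tuple $S=(W_1,\dots,W_k)$ of walks, where $W_i$ starts at the prescribed starting vertex of robot $i$; it is covering if every vertex of $T$ lies in some $W_i$. Its length is $l(S)=\sum_{i=1}^k l(W_i)$. For a graph $G$, $V(G)$ is its vertex set. *)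

(* Defs.v *)
From mathcomp Require Import all_boot.
Set Implicit Arguments. Unset Strict Implicit. Unset Printing Implicit Defensive.

Section Defs.
Variable V : finType.

Definition is_tree (e : rel V) : Prop :=
  [/\ symmetric e, irreflexive e, (forall x y : V, connect e x y)
    & ~ (exists c : seq V, ucycleb e c && (2 < size c))].

Definition step_rel (e : rel V) : rel V := fun x y => (x == y) || e x y.

Definition walk_from (e : rel V) (x : V) (w : seq V) : bool :=
  if w is y :: t then (y == x) && path (step_rel e) y t else false.

Definition steps (w : seq V) : seq (V * V) := zip w (behead w).

Definition wlen (w : seq V) : nat := count (fun p => p.1 != p.2) (steps w).

(* edges are represented as 2-element sets {u, v} *)
Definition edge_of (p : V * V) : {set V} := [set p.1; p.2].

Definition trav (w : seq V) (E : {set V}) : nat :=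
  count (fun p => (p.1 != p.2) && (edge_of p == E)) (steps w).

Definition wedges (w : seq V) : {set {set V}} :=
  [set E | trav w E > 0].

Definition is_tpath (e : rel V) (p : seq V) : bool :=
  if p is x :: t then uniq p && path e x t else false.

Definition pedges (p : seq V) : {set {set V}} :=
  [set edge_of q | q in steps p].

Definition fverts (F : {set {set V}}) : {set V} := \bigcup_(E in F) E.

Definition fadj (F : {set {set V}}) : rel V := fun x y => [set x; y] \in F.

Definition fcomp (F : {set {set V}}) (x : V) : {set V} :=
  [set y | connect (fadj F) x y].

Definition is_strategy (e : rel V) (k : nat) (s : 'I_k -> V)
  (W : 'I_k -> seq V) : Prop := forall i, walk_from e (s i) (W i).

Definition covering (k : nat) (W : 'I_k -> seq V) : Prop :=
  forall v : V, exists i, v \in W i.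

Definition slen (k : nat) (W : 'I_k -> seq V) : nat := \sum_(i < k) wlen (W i).

End Defs.

(* Main.v *)
Require Import Defs.
From mathcomp Require Import all_boot zify.
Set Implicit Arguments. Unset Strict Implicit. Unset Printing Implicit Defensive.

Lemma arith_tr n1 n2 n3 n4 : n1 + ~~ true + n2 + (n4 + n3) < n1 + true + (n3 + true + n2) + n4.
Proof. rewrite /=; lia. Qed.

Section Aux.
Variable V : finType.
Implicit Types (u r l : seq V) (x y a b z : V).

Lemma steps_cons x y u : steps (x :: y :: u) = (x, y) :: steps (y :: u).
Proof. by []. Qed.

Lemma steps_cat x u r : steps (x :: u ++ r) = steps (x :: u) ++ steps (last x u :: r).
Proof.
elim: u x => [|y u IH] x /=; first by case: r.
by rewrite steps_cons IH.
Qed.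

Lemma wlen_cat x u r : wlen (x :: u ++ r) = wlen (x :: u) + wlen (last x u :: r).
Proof. by rewrite /wlen steps_cat count_cat. Qed.

Lemma wlen_cons x y u : wlen (x :: y :: u) = (x != y) + wlen (y :: u).
Proof. by []. Qed.

Lemma mem_steps p l : p \in steps l -> (p.1 \in l) /\ (p.2 \in l).
Proof.
case: l => [|x u] //.
elim: u x => [|y u IH] x //.
rewrite steps_cons inE => /orP [/eqP -> | /IH [H1 H2]] /=.
  by rewrite !inE !eqxx orbT.
by rewrite inE H1 inE H2 !orbT.
Qed.

Lemma path_steps (R : rel V) x u : path R x u = all (fun p => R p.1 p.2) (steps (x :: u)).
Proof.
elim: u x => [|y u IH] x //.
by rewrite steps_cons /= IH.
Qed.

Lemma split_mem x l : x \in l -> exists p1 p2, l = p1 ++ x :: p2.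
Proof. by case/splitPr => p1 p2; exists p1, p2. Qed.

Definition cr x y (p : V * V) := (p == (x, y)) || (p == (y, x)).

Lemma cr_sym x y p : cr x y p = cr y x p.
Proof. by rewrite /cr orbC. Qed.

Lemma edge_cr x y p : x != y ->
  (p.1 != p.2) && (edge_of p == [set x; y]) = cr x y p.
Proof.
case: p => a b /= xy; rewrite /cr /edge_of /= !xpair_eqE.
apply/idP/idP.
  case/andP=> ab /eqP E.
  have ha : a \in [set x; y] by rewrite -E set21.
  have hb : b \in [set x; y] by rewrite -E set22.
  move: ha hb ab; rewrite !in_set2.
  by case/orP=> /eqP ->; case/orP=> /eqP ->; rewrite ?eqxx //= ?andbT ?orbT.
case/orP=> /andP [/eqP -> /eqP ->]; rewrite ?xy ?(eq_sym y) ?xy /=.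
  by [].
by apply/eqP; apply/setP=> z; rewrite !in_set2 orbC.
Qed.

Lemma trav_cr w x y : x != y -> trav w [set x; y] = count (cr x y) (steps w).
Proof. by move=> xy; apply: eq_count => p; rewrite edge_cr. Qed.

Lemma cr_cases x y a b : cr x y (a, b) -> (a = x /\ b = y) \/ (a = y /\ b = x).
Proof. by rewrite /cr !xpair_eqE => /orP [/andP [/eqP -> /eqP ->]|/andP [/eqP -> /eqP ->]]; [left|right]. Qed.

End Aux.
Section Tree.
Variable V : finType.
Variable e : rel V.
Hypothesis esym : symmetric e.
Hypothesis eirr : irreflexive e.
Hypothesis eacyc : ~ (exists c : seq V, ucycleb e c && (2 < size c)).
Implicit Types (u r l q : seq V) (x y a b z : V).

Local Notation srel := (step_rel e).

Lemma srel_sym : symmetric srel.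
Proof. by move=> a b; rewrite /step_rel eq_sym esym. Qed.

Lemma srel_neq a b : srel a b -> a != b -> e a b.
Proof. by rewrite /step_rel => /orP [/eqP ->|//]; rewrite eqxx. Qed.

Lemma srel_refl a : srel a a.
Proof. by rewrite /step_rel eqxx. Qed.

Lemma e_srel a b : e a b -> srel a b.
Proof. by rewrite /step_rel => ->; rewrite orbT. Qed.

Lemma e_neq a b : e a b -> a != b.
Proof. by apply: contraTneq => ->; rewrite eirr. Qed.

Definition G x y : rel V := fun a b => srel a b && ~~ cr x y (a, b).

Lemma cr_swap x y a b : cr x y (a, b) = cr x y (b, a).
Proof. by rewrite /cr !xpair_eqE orbC !(andbC (b == _)). Qed.

Lemma G_sym x y : symmetric (G x y).
Proof. by move=> a b; rewrite /G srel_sym cr_swap. Qed.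

Lemma G_symxy x y a b : G x y a b = G y x a b.
Proof. by rewrite /G cr_sym. Qed.

Lemma L_short y q : path srel y q -> exists q',
  [/\ path e y q', uniq (y :: q'), last y q' = last y q &
      {subset steps (y :: q') <= steps (y :: q)}].
Proof.
elim: q y => [|z r IH] y /=.
  by move=> _; exists [::].
case/andP=> yz /IH [r' [p' u' l' s']].
case: (boolP (y \in z :: r')) => yin.
  case/split_mem: yin => p1 [p2 E]; move: p' u' l' s'.
  case: p1 E => [|z1 p1] /=.
    case=> -> -> Hp Hu Hl Hs.
    by exists p2; split => //; move=> p /Hs; rewrite steps_cons inE => ->; rewrite orbT.
  case=> Ez ->; subst z1 => Hp Hu Hl Hs.
  exists p2; split.
  - by move: Hp; rewrite cat_path /= => /and3P [_ _ ->].
  - by move: Hu; rewrite cat_uniq => /and4P [_ _ _ H].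
  - by move: Hl; rewrite last_cat.
  move=> p Hp2; rewrite steps_cons inE; apply/orP; right; apply: Hs.
  by rewrite steps_cat mem_cat steps_cons inE Hp2 !orbT.
exists (z :: r'); split => //=.
- rewrite p'; rewrite srel_neq //.
  by apply: contraNneq yin => ->; rewrite inE eqxx.
- by rewrite yin.
move=> p; rewrite !steps_cons !inE => /orP [->//|/s' ->]; by rewrite orbT.
Qed.

Lemma path_allsteps (R : rel V) x u p : path R x u -> p \in steps (x :: u) -> R p.1 p.2.
Proof. by rewrite path_steps => /allP H /H. Qed.

Lemma nobypass0 x y : e x y -> ~~ connect (G x y) x y.
Proof.
move=> exy; apply/negP => /connectP [p Hp Hl].
have Hs : path srel x p.
  by apply: sub_path Hp => a b /andP [].
case: (L_short Hs) => q' [Pq Uq Lq Sq].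
move: Pq Uq Lq Sq; case: q' => [|z1 [|z2 q'']] /=.
- by move=> _ _ Ex; move: exy; rewrite Hl -Ex eirr.
- move=> _ _ Ez Sq.
  have : (x, z1) \in steps (x :: p) by apply: Sq; rewrite steps_cons inE eqxx.
  by move/(path_allsteps Hp) => /andP [_]; rewrite /cr /= Ez -Hl eqxx.
move=> Pq Uq Lq _; apply: eacyc; exists [:: x, z1, z2 & q''].
have Hc : cycle e [:: x, z1, z2 & q''].
  rewrite /cycle rcons_path; apply/andP; split; first exact: Pq.
  by rewrite /= Lq -Hl esym.
by rewrite /ucycleb Hc /= andbT.
Qed.

Lemma nobypass x y a b : e x y -> cr x y (a, b) -> ~~ connect (G x y) a b.
Proof.
move=> exy /cr_cases [[-> ->]|[-> ->]]; first exact: nobypass0.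
rewrite (sym_connect_sym (@G_sym x y)); exact: nobypass0.
Qed.

Lemma pathG x y a r : path srel a r -> ~~ has (cr x y) (steps (a :: r)) ->
  path (G x y) a r.
Proof.
rewrite !path_steps => /allP H1 /hasPn H2; apply/allP => p Hp.
by rewrite /G H1 //= -surjective_pairing H2.
Qed.

Lemma conn_walk x y a r : path srel a r -> ~~ has (cr x y) (steps (a :: r)) ->
  {subset a :: r <= connect (G x y) a}.
Proof. by move=> H1 H2; apply: path_connect; apply: pathG. Qed.

End Tree.
Section Split.
Variable V : finType.
Implicit Types (u r l q : seq V) (x y a b z : V).

Lemma first_cross (P : pred (V * V)) a u : has P (steps (a :: u)) ->
  exists u1 b u2, [/\ u = u1 ++ b :: u2, P (last a u1, b) & ~~ has P (steps (a :: u1))].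
Proof.
elim: u a => [|z r IH] a //.
rewrite steps_cons /= => /orP [Hz|/IH [u1 [b [u2 [E Hb Hn]]]]].
  by exists [::], z, r.
case: (boolP (P (a, z))) => Haz.
  by exists [::], z, r.
exists (z :: u1), b, u2; split; [by rewrite E | exact: Hb |].
by rewrite steps_cons; apply/norP; split.
Qed.

Lemma steps_split a u1 b u2 :
  steps (a :: u1 ++ b :: u2) = steps (a :: u1) ++ (last a u1, b) :: steps (b :: u2).
Proof. by rewrite steps_cat. Qed.

Lemma count_split (P : pred (V * V)) a u1 b u2 :
  count P (steps (a :: u1 ++ b :: u2)) =
  count P (steps (a :: u1)) + P (last a u1, b) + count P (steps (b :: u2)).
Proof. by rewrite steps_split count_cat /= addnA. Qed.

Lemma wlen_split a u1 b u2 :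
  wlen (a :: u1 ++ b :: u2) = wlen (a :: u1) + (last a u1 != b) + wlen (b :: u2).
Proof. by rewrite /wlen count_split. Qed.

Lemma path_split (R : rel V) a u1 b u2 :
  path R a (u1 ++ b :: u2) = [&& path R a u1, R (last a u1) b & path R b u2].
Proof. by rewrite cat_path. Qed.

Lemma hasN0 (P : pred (V * V)) (l : seq (V * V)) : ~~ has P l -> count P l = 0.
Proof. by rewrite has_count -eqn0Ngt => /eqP. Qed.

End Split.
Section ListAux.
Variable V : finType.
Implicit Types (u r l q : seq V) (x y a b z : V).

Lemma find_first (p : pred V) l : has p l ->
  exists o1 d o3, [/\ l = o1 ++ d :: o3, p d & ~~ has p o1].
Proof. by case/split_find => d o1 o3 pd no; exists o1, d, o3; rewrite cat_rcons. Qed.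

Lemma exc (X : pred V) s0 u v : X s0 -> X (last s0 u) -> v \in u -> ~~ X v ->
  exists u1 b u2 d (w : seq V), [/\ u = u1 ++ b :: (u2 ++ d :: w), X (last s0 u1), X d,
     all (fun y => ~~ X y) (b :: u2) & v \in b :: u2].
Proof.
move: {2}(size u) (leqnn (size u)) => n.
elim: n u s0 => [|n IH] [|z r] s0 //= Hn Xs Xl Hv Xv.
case: (boolP (X z)) => Xz.
  have Hvr : v \in r.
    by move: Hv; rewrite inE => /orP [/eqP Evz|//]; move: Xv; rewrite Evz Xz.
  have [u1 [b [u2 [d [z' [E1 X1 Xd Al Vb]]]]]] := IH r z Hn Xz Xl Hvr Xv.
  by exists (z :: u1), b, u2, d, z'; split => //; rewrite E1.
have Hr : has X r.
  apply/hasP; exists (last z r) => //.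
  move: (mem_last z r); rewrite inE => /orP [/eqP Ez|//].
  by move: Xl; rewrite Ez (negbTE Xz).
have [o1 [d [o3 [Er Xd No]]]] := find_first Hr.
case: (boolP (v \in z :: o1)) => Hv1.
  exists [::], z, o1, d, o3; split => //=; first by rewrite Er.
  by rewrite Xz /=; move: No; rewrite -all_predC.
have Hv3 : v \in o3.
  move: Hv; rewrite Er inE mem_cat inE.
  case/or3P => [Hvz|Hvo|/orP [/eqP Hvd|//]].
  - by move: Hv1; rewrite inE Hvz.
  - by move: Hv1; rewrite inE Hvo orbT.
  by move: Xv; rewrite Hvd Xd.
have Hs3 : size o3 <= n.
  by move: Hn; rewrite Er size_cat /=; lia.
have Xl3 : X (last d o3) by move: Xl; rewrite Er last_cat.
have [u1 [b [u2 [d' [z' [E1 X1 Xd' Al Vb]]]]]] := IH o3 d Hs3 Xd Xl3 Hv3 Xv.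
exists (z :: o1 ++ d :: u1), b, u2, d', z'; split => //.
- by rewrite Er E1 /= -catA.
by rewrite /= last_cat.
Qed.

Lemma steps_infix p h l r : {subset steps (h :: l) <= steps (p ++ h :: l ++ r)}.
Proof.
move=> q Hq.
have H1 : q \in steps (h :: l ++ r) by rewrite steps_cat mem_cat Hq.
case: p => [|p0 p] //.
by rewrite cat_cons steps_split mem_cat inE H1 !orbT.
Qed.

Lemma steps_mem_split a b l : (a, b) \in steps l -> exists p1 p2, l = p1 ++ a :: b :: p2.
Proof.
case: l => [|h t] //.
elim: t h => [|y t IH] h //.
rewrite steps_cons inE => /orP [/eqP [-> ->]|/IH [p1 [p2 E]]].
  by exists [::], t.
by exists (h :: p1), p2; rewrite E.
Qed.

Lemma mem_cons_steps z h t : z \in t -> exists2 p, p \in steps (h :: t) & p.2 = z.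
Proof.
elim: t h => [|y t IH] h //.
rewrite inE steps_cons; case/orP => [Ez|Hz].
  by exists (h, y); rewrite ?inE ?eqxx //= (eqP Ez).
have [p Hp Ep] := IH y Hz.
by exists p; rewrite // inE Hp orbT.
Qed.

End ListAux.
Section Walks.
Variable V : finType.
Variable e : rel V.
Implicit Types (u r l q : seq V) (x y a b : V).
Local Notation srel := (step_rel e).

Lemma rot b u2 v : path srel b u2 -> last b u2 = b -> v \in b :: u2 ->
  exists z', [/\ path srel v z', last v z' = v, wlen (v :: z') = wlen (b :: u2)
     & {subset b :: u2 <= v :: z'}].
Proof.
move=> Hp Hl /split_mem [p1 [p2 E]].
case: p1 E => [|b' p1] /=.
  by case=> Eb Eu; subst b u2; exists p2; split.
case=> Eb Eu; subst b' u2.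
exists (p2 ++ b :: p1 ++ [:: v]); split.
- move: Hp; rewrite !path_split => /and3P [P1 S1 P2].
  rewrite P2 /=; move: Hl; rewrite last_cat /= => ->.
  by rewrite srel_refl P1 S1.
- by rewrite last_cat /= last_cat.
- rewrite wlen_split wlen_cat wlen_split; move: Hl; rewrite last_cat /= => ->.
  rewrite eqxx /=.
  have -> : wlen [:: last b p1; v] = (last b p1 != v) by rewrite wlen_cons addn0.
  move: (wlen (v :: p2)) (wlen (b :: p1)) (last b p1 != v) => n1 n2 n3.
  by rewrite addn0 addnC.
move=> y; rewrite !(inE, mem_cat).
by case/or4P => ->; rewrite ?orbT.
Qed.

Lemma ins h m v z' : path srel h m -> v \in h :: m -> path srel v z' -> last v z' = v ->
  exists m', [/\ path srel h m', wlen (h :: m') = wlen (h :: m) + wlen (v :: z'),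
    {subset h :: m <= h :: m'} & {subset v :: z' <= h :: m'}].
Proof.
move=> Hp /split_mem [p1 [p2 E]] Pz Lz.
case: p1 E => [|h' p1] /=.
  case=> Eh Em; subst h m.
  exists (z' ++ p2); split.
  - by rewrite cat_path Pz Lz.
  - by rewrite wlen_cat Lz addnC.
  - by move=> y; rewrite !(inE, mem_cat) => /orP [->|->]; rewrite ?orbT.
  by move=> y; rewrite !(inE, mem_cat) => /orP [->|->]; rewrite ?orbT.
case=> Eh Em; subst h' m.
exists (p1 ++ v :: (z' ++ p2)); split.
- move: Hp; rewrite !path_split => /and3P [P1 S1 P2].
  by rewrite P1 S1 cat_path Pz Lz P2.
- rewrite !wlen_split -cat_cons wlen_cat Lz.
  move: (wlen (h :: p1)) (last h p1 != v) (wlen (v :: z')) (wlen (v :: p2)) => n1 n2 n3 n4.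
  by rewrite (addnC n3) addnA.
- by move=> y; rewrite !(inE, mem_cat) => /or4P [->|->|->|->]; rewrite ?orbT.
by move=> y; rewrite !(inE, mem_cat) => /orP [->|->]; rewrite ?orbT.
Qed.

End Walks.
Section Main.
Variable V : finType.
Variable e : rel V.
Hypothesis esym : symmetric e.
Hypothesis eirr : irreflexive e.
Hypothesis eacyc : ~ (exists c : seq V, ucycleb e c && (2 < size c)).
Variable k : nat.
Variable s : 'I_k -> V.
Variable W : 'I_k -> seq V.
Hypothesis Hstr : is_strategy e s W.
Hypothesis Hcov : covering W.
Hypothesis Hmin : forall W' : 'I_k -> seq V, is_strategy e s W' -> covering W' ->
     slen W <= slen W'.
Implicit Types (u r q : seq V) (x y a b z : V).

Local Notation srel := (step_rel e).
Local Notation G := (G e).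

Lemma Wi i : W i = s i :: behead (W i) /\ path srel (s i) (behead (W i)).
Proof.
by move: (Hstr i); rewrite /walk_from; case: (W i) => [|y t] // /andP [/eqP -> ->].
Qed.

Lemma no_improve2 i j w1 w2 : i != j -> walk_from e (s i) w1 -> walk_from e (s j) w2 ->
  (forall v, v \in W i -> (v \in w1) || (v \in w2)) -> {subset W j <= w2} ->
  wlen w1 + wlen w2 < wlen (W i) + wlen (W j) -> False.
Proof.
move=> ij H1 H2 Ci Cj Hlt.
pose W' := fun l => if l == i then w1 else if l == j then w2 else W l.
have S' : is_strategy e s W'.
  move=> l; rewrite /W'; case: eqP => [->//|_]; case: eqP => [->//|_]; exact: Hstr.
have C' : covering W'.
  move=> v; case: (Hcov v) => l Hl.
  case: (eqVneq l i) => [Eli|nli].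
    subst l; case/orP: (Ci _ Hl) => Hv; first by exists i; rewrite /W' eqxx.
    by exists j; rewrite /W' eq_sym (negbTE ij) eqxx.
  case: (eqVneq l j) => [Elj|nlj].
    by subst l; exists j; rewrite /W' eq_sym (negbTE ij) eqxx; apply: Cj.
  by exists l; rewrite /W' (negbTE nli) (negbTE nlj).
have sp : forall X : 'I_k -> seq V, slen X =
    wlen (X i) + wlen (X j) + \sum_(m < k | (m != i) && (m != j)) wlen (X m).
  by move=> X; rewrite /slen (bigD1 i) //= (bigD1 j) /= ?addnA // eq_sym.
have := Hmin S' C'; rewrite !sp.
rewrite /W' eqxx eq_sym (negbTE ij) eqxx.
rewrite [X in _ <= _ + X](eq_bigr (fun m => wlen (W m))); last first.
  by move=> m /andP [/negbTE -> /negbTE ->].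
by rewrite leq_add2r leqNgt Hlt.
Qed.

Lemma no_improve1 i w1 : walk_from e (s i) w1 -> {subset W i <= w1} ->
  wlen w1 < wlen (W i) -> False.
Proof.
move=> H1 Ci Hlt.
pose W' := fun l => if l == i then w1 else W l.
have S' : is_strategy e s W'.
  move=> l; rewrite /W'; case: eqP => [->//|_]; exact: Hstr.
have C' : covering W'.
  move=> v; case: (Hcov v) => l Hl.
  case: (eqVneq l i) => [Eli|nli].
    by subst l; exists i; rewrite /W' eqxx; apply: Ci.
  by exists l; rewrite /W' (negbTE nli).
have sp : forall X : 'I_k -> seq V, slen X =
    wlen (X i) + \sum_(m < k | m != i) wlen (X m).
  by move=> X; rewrite /slen (bigD1 i).
have := Hmin S' C'; rewrite !sp.
rewrite /W' eqxx.
rewrite [X in _ <= _ + X](eq_bigr (fun m => wlen (W m))); last first.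
  by move=> m /negbTE ->.
by rewrite leq_add2r leqNgt Hlt.
Qed.

Lemma alt x y a b c d : e x y -> cr x y (a, b) -> cr x y (c, d) ->
  connect (G x y) b c -> c = b /\ d = a.
Proof.
move=> exy H1 H2 Hc.
case/cr_cases: H1 => [[Ea Eb]|[Ea Eb]]; case/cr_cases: H2 => [[Ec Ed]|[Ec Ed]]; subst => //.
- by move: (nobypass esym eirr eacyc exy (a:=y) (b:=x)); rewrite /cr eqxx orbT Hc => /(_ isT).
- by move: (nobypass esym eirr eacyc exy (a:=x) (b:=y)); rewrite /cr eqxx Hc => /(_ isT).
Qed.


Lemma le2 i x y : e x y -> count (cr x y) (steps (W i)) <= 2.
Proof.
move=> exy; rewrite leqNgt; apply/negP => H3.
have [Ew Pw] := Wi i.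
move: H3 Pw; rewrite Ew; set s0 := s i; set u := behead (W i) => H3 Pw.
have /first_cross [u1 [b1 [u2 [Eu C1 N1]]]] : has (cr x y) (steps (s0 :: u)).
  by rewrite has_count (leq_trans _ H3).
move: H3 Pw; rewrite Eu count_split (hasN0 N1) C1 /= add1n ltnS => H2 Pw.
have /first_cross [v1 [b2 [z [Eu2 C2 N2]]]] : has (cr x y) (steps (b1 :: u2)).
  by rewrite has_count (leq_trans _ H2).
move: H2 Pw; rewrite Eu2 count_split (hasN0 N2) C2 /= add1n ltnS => H1 Pw.
have /first_cross [z1 [b3 [z2 [Ez C3 N3]]]] : has (cr x y) (steps (b2 :: z)).
  by rewrite has_count.
move: Pw; rewrite Ez => Pw.
move: Pw; rewrite !path_split => /and3P [P1 S1 /and3P [P2 S2 /and3P [P3 S3 P4]]].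
have K2 : connect (G x y) b1 (last b1 v1).
  by apply: (conn_walk P2 N2); apply: mem_last.
have K3 : connect (G x y) b2 (last b2 z1).
  by apply: (conn_walk P3 N3); apply: mem_last.
have [E2 E2'] := alt exy C1 C2 K2.
have [E3 E3'] := alt exy C2 C3 K3.
have nab : last s0 u1 != b1.
  by case/cr_cases: C1 => [[-> ->]|[-> ->]]; rewrite ?(e_neq eirr exy) // eq_sym (e_neq eirr exy).
subst b2 b3.
pose u' := u1 ++ last s0 u1 :: (z1 ++ b1 :: (v1 ++ last b1 v1 :: z2)).
apply: (@no_improve1 i (s0 :: u')).
- by rewrite /walk_from eqxx /= /u' !path_split P1 P2 P3 P4 E3 S1 !srel_refl.
- rewrite Ew -/s0 -/u Eu Eu2 Ez /u' => v.
  suff Hp : perm_eq (s0 :: u1 ++ b1 :: (v1 ++ last s0 u1 :: (z1 ++ last b1 v1 :: z2))) (s0 :: u') by rewrite (perm_mem Hp).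
  rewrite perm_cons perm_cat2l.
  rewrite -(cat_cons b1 v1) -(cat_cons (last s0 u1) z1) perm_catCA.
  exact: perm_refl.
rewrite Ew -/s0 -/u Eu Eu2 Ez /u'.
rewrite !wlen_split E3 E2 !eqxx nab /=.
have nba : b1 != last s0 u1 by rewrite eq_sym.
rewrite nba.
move: (wlen (s0 :: u1)) (wlen (last s0 u1 :: z1)) (wlen (b1 :: v1)) (wlen (b1 :: z2)) => n1 n2 n3 n4.
rewrite /= !addn0 !addn1 !addSn !addnS ltnS. by rewrite (addnCA n2) ltnS leqnSn.
Qed.


Lemma transplant i j u1 b u2 (z : seq V) v : i != j ->
  W i = s i :: u1 ++ b :: (u2 ++ last (s i) u1 :: z) ->
  last b u2 = b -> last (s i) u1 != b -> v \in b :: u2 -> v \in W j -> False.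
Proof.
move=> ij Ew Hl nab Hv Hvj.
have [_ Pw] := Wi i.
move: Pw; rewrite Ew /= !path_split => /and3P [P1 S1 /and3P [P2 S2 P3]].
have [z' [Pz Lz Wz Sz]] := rot P2 Hl Hv.
have [Ej Pj] := Wi j.
have Hvj' : v \in s j :: behead (W j) by rewrite -Ej.
have [m' [Pm Wm Sm1 Sm2]] := ins Pj Hvj' Pz Lz.
apply: (@no_improve2 i j (s i :: u1 ++ last (s i) u1 :: z) (s j :: m') ij).
- by rewrite /walk_from eqxx /= path_split P1 srel_refl P3.
- by rewrite /walk_from eqxx /=.
- move=> y; rewrite Ew -[s i :: _]cat_cons -[b :: _]cat_cons !mem_cat => /or3P [H|H|H].
  + by rewrite -[s i :: _]cat_cons mem_cat H.
  + by apply/orP; right; apply: Sm2; apply: Sz.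
  + by rewrite -[s i :: _]cat_cons mem_cat H orbT.
- by move=> y; rewrite Ej => /Sm1.
have nba : b != last (s i) u1 by rewrite eq_sym.
rewrite Ew Ej Wm Wz !wlen_split eqxx Hl nab nba.
move: (wlen (s i :: u1)) (wlen (last (s i) u1 :: z)) (wlen (b :: u2)) (wlen (s j :: behead (W j))) => n1 n2 n3 n4.
exact: arith_tr.
Qed.



Lemma dec1 i a b : has (cr a b) (steps (W i)) -> exists u1 b1 u2,
  [/\ W i = s i :: u1 ++ b1 :: u2, cr a b (last (s i) u1, b1),
      ~~ has (cr a b) (steps (s i :: u1)) &
      count (cr a b) (steps (W i)) = (count (cr a b) (steps (b1 :: u2))).+1].
Proof.
have [Ew _] := Wi i; rewrite Ew => H.
have [u1 [b1 [u2 [Eu C1 N1]]]] := first_cross H.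
exists u1, b1, u2; split => //; first by rewrite Eu.
by rewrite Eu count_split (hasN0 N1) C1 add0n add1n.
Qed.

Lemma dec2 i a b : e a b -> count (cr a b) (steps (W i)) = 2 ->
  exists u1 b1 v1 (z : seq V),
  [/\ W i = s i :: u1 ++ b1 :: (v1 ++ last (s i) u1 :: z), last b1 v1 = b1,
      cr a b (last (s i) u1, b1), ~~ has (cr a b) (steps (s i :: u1)) &
      ~~ has (cr a b) (steps (last (s i) u1 :: z))].
Proof.
move=> eab H2.
have /dec1 [u1 [b1 [u2 [Ew C1 N1 Hc]]]] : has (cr a b) (steps (W i)) by rewrite has_count H2.
have [_ Pw] := Wi i.
move: Hc; rewrite H2 => /eqP; rewrite eqSS => /eqP Hc.
have /first_cross [v1 [b2 [z [Eu2 C2 N2]]]] : has (cr a b) (steps (b1 :: u2)) by rewrite has_count -Hc.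
move: Hc; rewrite Eu2 count_split (hasN0 N2) C2 add0n add1n => /eqP; rewrite eqSS => /eqP H0.
move: Pw; rewrite Ew Eu2 /= !path_split => /and3P [P1 S1 /and3P [P2 S2 P3]].
have K2 : connect (G a b) b1 (last b1 v1) by apply: (conn_walk P2 N2); apply: mem_last.
have [E2 E2'] := alt eab C1 C2 K2.
subst b2.
by exists u1, b1, v1, z; split => //; rewrite has_count -H0.
Qed.

Set Default Proof Using "All".
Section Robot.
Variable i : 'I_k.
Variable q : seq V.
Hypothesis Hq : path e (s i) q.
Hypothesis Hu : uniq (s i :: q).
Hypothesis Hl : last (s i) q = last (s i) (behead (W i)).
Hypothesis Hs : {subset steps (s i :: q) <= steps (W i)}.

Local Notation c := (s i :: q).
Local Notation u := (behead (W i)).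
Local Notation t := (last (s i) (behead (W i))).

Lemma Pc : path srel (s i) q.
Proof. by apply: sub_path Hq => a b; apply: e_srel. Qed.

Lemma L1 x y : ~~ has (cr x y) (steps c) -> {subset c <= connect (G x y) (s i)}.
Proof. move=> H; exact: (conn_walk Pc H). Qed.

Lemma Gsym x y a b : connect (G x y) a b = connect (G x y) b a.
Proof. by rewrite (sym_connect_sym (G_sym esym x y)). Qed.

Lemma L2 x y : e x y -> has (cr x y) (steps c) -> ~ connect (G x y) (s i) t.
Proof.
move=> exy H Kt.
have [c1 [be [c2 [Eq C1 N1]]]] := first_cross H.
have := Pc; rewrite Eq path_split => /and3P [Pc1 _ Pc2].
have Ka : connect (G x y) (s i) (last (s i) c1).
  by apply: (conn_walk Pc1 N1); apply: mem_last.
have N2 : ~~ has (cr x y) (steps (be :: c2)).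
  apply/hasPn => p Hp; apply/negP => Cp.
  have [Hp1 Hp2] := mem_steps Hp.
  have Hal : last (s i) c1 \in be :: c2.
    case/cr_cases: C1 => [[-> Eb]|[-> Eb]]; case: p Cp Hp1 Hp2 {Hp} => p1 p2 /cr_cases [[-> ->]|[-> ->]] //.
  move: Hu; rewrite Eq -cat_cons cat_uniq => /and3P [_ /hasPn Hd _].
  by move: (Hd _ Hal); rewrite mem_last.
have Kb : connect (G x y) be (last be c2).
  by apply: (conn_walk Pc2 N2); apply: mem_last.
have Ht : last be c2 = t by rewrite -Hl Eq last_cat.
rewrite Ht in Kb.
have : connect (G x y) (last (s i) c1) be.
  apply: connect_trans (connect_trans _ Kt) _; first by rewrite Gsym.
  by rewrite Gsym.
by move=> K; move: (nobypass esym eirr eacyc exy C1); rewrite K.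
Qed.

Lemma cr_e x y a b : e x y -> cr x y (a, b) -> e a b.
Proof. by move=> exy /cr_cases [[-> ->]|[-> ->]] //; rewrite esym. Qed.

Lemma Wpath : path srel (s i) u.
Proof. by have [_ ->] := Wi i. Qed.

Lemma Wsteps_srel p : p \in steps (W i) -> srel p.1 p.2.
Proof. have [Ew Pw] := Wi i; rewrite Ew; exact: path_allsteps Pw. Qed.

Lemma t_in_c : t \in c.
Proof. by rewrite -Hl mem_last. Qed.

Lemma L3 E : E \in pedges c -> trav (W i) E = 1.
Proof.
case/imsetP => p Hp ->; case: p Hp => a b Hp.
have eab : e a b := path_allsteps Hq Hp.
rewrite /edge_of /= trav_cr ?(e_neq eirr eab) //.
have H1 : 0 < count (cr a b) (steps (W i)).
  by rewrite -has_count; apply/hasP; exists (a, b); [exact: Hs | rewrite /cr eqxx].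
have H2 := le2 i eab.
have H3 : count (cr a b) (steps (W i)) != 2.
  apply/eqP => /(dec2 eab) [u1 [b1 [v1 [z [Ew Hl1 C1 N1 N3]]]]].
  apply: (L2 eab); first by apply/hasP; exists (a, b) => //; rewrite /cr eqxx.
  have [P1 P3] : path srel (s i) u1 /\ path srel (last (s i) u1) z.
    by move: Wpath; rewrite Ew /= !path_split => /and3P [-> _ /and3P [_ _ ->]].
  have Ka : connect (G a b) (s i) (last (s i) u1) by apply: (conn_walk P1 N1); apply: mem_last.
  have Kz : connect (G a b) (last (s i) u1) (last (last (s i) u1) z).
    by apply: (conn_walk P3 N3); apply: mem_last.
  have -> : t = last (last (s i) u1) z by rewrite Ew /= !last_cat /= last_cat Hl1.
  exact: connect_trans Ka Kz.
move: H1 H2 H3; case: (count _ _) => [|[|[|n]]] //.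
Qed.

Lemma L4 E : E \in wedges (W i) -> E \notin pedges c -> exists a b,
  [/\ E = [set a; b], e a b, count (cr a b) (steps (W i)) = 2 & ~~ has (cr a b) (steps c)].
Proof.
rewrite inE /trav -has_count => /hasP [[a b] Hp /andP [/= nab /eqP HE]] HnP.
have eab : e a b by apply: srel_neq (Wsteps_srel Hp) nab.
have Nc : ~~ has (cr a b) (steps c).
  apply/hasPn => p' Hp'; apply/negP => C; move: HnP; rewrite -HE /edge_of /=.
  have : (p'.1 != p'.2) && (edge_of p' == [set a; b]) by rewrite edge_cr.
  by case/andP => _ /eqP <-; move/negP; apply; apply: imset_f.
exists a, b; split => //.
have H1 : 0 < count (cr a b) (steps (W i)).
  by rewrite -has_count; apply/hasP; exists (a, b); [exact: Hp | rewrite /cr eqxx].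
have H2 := le2 i eab.
have H3 : count (cr a b) (steps (W i)) != 1.
  apply/eqP => H1'.
  have /dec1 [u1 [b1 [u2 [Ew C1 N1 Hc]]]] : has (cr a b) (steps (W i)) by rewrite has_count H1'.
  move: Hc; rewrite H1' => /eqP; rewrite eqSS eq_sym eqn0Ngt -has_count => N2.
  have [P1 P2] : path srel (s i) u1 /\ path srel b1 u2.
    by move: Wpath; rewrite Ew /= path_split => /and3P [-> _ ->].
  have Ka : connect (G a b) (s i) (last (s i) u1) by apply: (conn_walk P1 N1); apply: mem_last.
  have Kb : connect (G a b) b1 (last b1 u2) by apply: (conn_walk P2 N2); apply: mem_last.
  have Kt : connect (G a b) (s i) t by apply: (L1 Nc); apply: t_in_c.
  have Ht : t = last b1 u2 by rewrite Ew /= last_cat.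
  rewrite Ht in Kt.
  have : connect (G a b) (last (s i) u1) b1.
    apply: connect_trans (connect_trans _ Kt) _; first by rewrite Gsym.
    by rewrite Gsym.
  by move=> K; move: (nobypass esym eirr eacyc eab C1); rewrite K.
by move: H1 H2 H3; case: (count _ _) => [|[|[|n]]].
Qed.

Lemma L5 E j : E \in wedges (W i) -> E \notin pedges c -> j != i -> trav (W j) E = 0.
Proof.
move=> Hw Hp ji.
have [a [b [-> eab Hc Nc]]] := L4 Hw Hp.
rewrite trav_cr ?(e_neq eirr eab) //; apply/eqP; rewrite -leqn0 leqNgt -has_count.
apply/negP => /hasP [p Hpj Cp].
have [u1 [b1 [v1 [z [Ew Hl1 C1 N1 N3]]]]] := dec2 eab Hc.
have Hb1 : b1 \in W j.
  have [H1 H2] := mem_steps Hpj.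
  by case/cr_cases: C1 => [[_ ->]|[_ ->]]; case: p Cp {Hpj} H1 H2 => p1 p2 /cr_cases [[-> ->]|[-> ->]].
have nab : last (s i) u1 != b1 by apply: (e_neq eirr); apply: cr_e eab C1.
by apply: (transplant (j:=j) _ Ew Hl1 nab _ Hb1); rewrite ?inE ?eqxx // eq_sym.
Qed.

Local Notation F := (wedges (W i) :\: pedges c).

Lemma notin_pedges a b : a \notin c -> [set a; b] \notin pedges c.
Proof.
move=> Na; apply/negP => /imsetP [p' Hp' E].
have [H1 H2] := mem_steps Hp'.
have : a \in edge_of p' by rewrite -E set21.
by rewrite /edge_of in_set2 => /orP [/eqP Ea|/eqP Ea]; move: Na; rewrite Ea ?H1 ?H2.
Qed.

Lemma L6 x y : fadj F x y -> [/\ e x y, x \in W i, y \in W i & ~~ has (cr x y) (steps c)].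
Proof.
rewrite /fadj inE => /andP [HnP].
rewrite inE /trav -has_count => /hasP [[a b] Hp /andP [/= nab /eqP HE]].
have nxy : x != y.
  apply/eqP => Exy; subst y.
  have : a \in [set x; x] by rewrite -HE set21.
  have : b \in [set x; x] by rewrite -HE set22.
  by rewrite !in_set2 !orbb => /eqP Eb /eqP Ea; move: nab; rewrite Ea Eb eqxx.
have Cab : cr x y (a, b) by rewrite -edge_cr // nab HE eqxx.
have eab : e a b by apply: srel_neq (Wsteps_srel Hp) nab.
have [H1 H2] := mem_steps Hp.
have Nc : ~~ has (cr x y) (steps c).
  apply/hasPn => p' Hp'; apply/negP => C; move: HnP.
  have : (p'.1 != p'.2) && (edge_of p' == [set x; y]) by rewrite edge_cr.
  by case/andP => _ /eqP <-; move/negP; apply; apply: imset_f.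
by case/cr_cases: Cab H1 H2 eab Nc => [[<- <-]|[<- <-]] /= H1 H2 eab Nc; split => //; rewrite esym.
Qed.

Lemma Ret a b u2 d : a \in c -> b \notin c -> e a b -> path srel b u2 ->
  all (fun y => y \notin c) u2 -> d \in c -> srel (last b u2) d ->
  d = a /\ last b u2 = b.
Proof.
move=> Ha Nb eab P2 A2 Hd S2.
have Nc : ~~ has (cr a b) (steps c).
  apply/hasPn => p Hp; apply/negP => /cr_cases Cp.
  have [H1 H2] := mem_steps Hp.
  by case: Cp => [[_ Eb]|[Eb _]]; move: Nb; rewrite -Eb ?H1 ?H2.
have Kda : connect (G a b) d a.
  apply: connect_trans (_ : connect _ d (s i)) _; last by apply: (L1 Nc).
  by rewrite Gsym; apply: (L1 Nc).
case: (boolP ((last b u2 == b) && (d == a))) => [/andP [/eqP -> /eqP ->] //|Hn].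
exfalso.
have Nbu : forall y, y \in b :: u2 -> y \notin c.
  by move=> y; rewrite inE => /orP [/eqP ->//|/(allP A2)].
have Pr : path srel b (rcons u2 d) by rewrite rcons_path P2 S2.
have Nr : ~~ has (cr a b) (steps (b :: rcons u2 d)).
  rewrite -cats1 steps_cat has_cat negb_or; apply/andP; split.
    apply/hasPn => p Hp; apply/negP => /cr_cases Cp.
    have [H1 H2] := mem_steps Hp.
    by case: Cp => [[Ea _]|[_ Ea]]; move: (Nbu _ H1) (Nbu _ H2); rewrite Ea Ha.
  rewrite /= orbF; apply/negP => /cr_cases [[Ea _]|[E1 E2]].
    by move: (Nbu _ (mem_last b u2)); rewrite Ea Ha.
  by move: Hn; rewrite E1 E2 !eqxx.
have Kbd : connect (G a b) b d.
  by apply: (conn_walk Pr Nr); rewrite inE mem_rcons inE eqxx orbT.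
have : connect (G a b) b a by apply: connect_trans Kbd Kda.
have Cba : cr a b (b, a) by rewrite /cr eqxx orbT.
by move=> K; move: (nobypass esym eirr eacyc eab Cba); rewrite K.
Qed.

Lemma Exc v : v \in W i -> v \notin c -> exists u1 b u2 (w : seq V),
  [/\ W i = s i :: u1 ++ b :: (u2 ++ last (s i) u1 :: w), last b u2 = b,
      last (s i) u1 \in c, all (fun y => y \notin c) (b :: u2) & v \in b :: u2].
Proof.
move=> Hv Nv.
have [Ew Pw] := Wi i.
have Hvu : v \in u.
  move: Hv; rewrite {1}Ew inE => /orP [/eqP Evs|//].
  by move: Nv; rewrite Evs mem_head.
have [u1 [b [u2 [d [w [Eu Xa Xd Al Vb]]]]]] :=
  @exc _ (fun y => y \in c) (s i) u v (mem_head _ _) t_in_c Hvu Nv.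
move: (Pw); rewrite Eu !path_split => /and3P [P1 S1 /and3P [P2 S2 P3]].
have Nb : b \notin c by move: Al => /= /andP [].
have nab : last (s i) u1 != b by apply: contraNneq Nb => <-.
have eab := srel_neq S1 nab.
have A2 : all (fun y => y \notin c) u2 by move: Al => /= /andP [].
have [Eda Elb] := Ret Xa Nb eab P2 A2 Xd S2.
exists u1, b, u2, w; split => //.
by rewrite Ew Eu Eda.
Qed.

Lemma K v j : v \in W i -> v \notin c -> j != i -> v \in W j -> False.
Proof.
move=> Hv Nv ji Hvj.
have [u1 [b [u2 [w [Ew Elb Xa Al Vb]]]]] := Exc Hv Nv.
have Nb : b \notin c by move: Al => /= /andP [].
have nab : last (s i) u1 != b by apply: contraNneq Nb => <-.
by apply: (transplant (j:=j) _ Ew Elb nab Vb Hvj); rewrite eq_sym.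
Qed.

Definition Rrel : rel V := fun x y => (x == y) || fadj F x y.

Lemma cex x0 : x0 \in W i -> x0 \notin c -> exists2 p, p \in c & connect (fadj F) x0 p.
Proof.
move=> Hv Nv.
have [u1 [b [u2 [w [Ew Elb Xa Al Vb]]]]] := Exc Hv Nv.
have [q1 [q2 E12]] := split_mem Vb.
have Hsub : {subset x0 :: q2 <= b :: u2} by rewrite E12 => y Hy; rewrite mem_cat Hy orbT.
have EW : W i = (s i :: u1 ++ q1) ++ x0 :: (rcons q2 (last (s i) u1) ++ w).
  by rewrite Ew -[b :: (u2 ++ _)]cat_cons E12 cat_rcons -!catA /= -catA.
exists (last (s i) u1) => //.
apply: (@connect_sub _ Rrel).
  move=> x y /orP [/eqP ->|H]; [exact: connect0 | exact: connect1].
apply/connectP; exists (rcons q2 (last (s i) u1)); last by rewrite last_rcons.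
rewrite path_steps; apply/allP => p Hp.
have Hp1 : p.1 \in x0 :: q2.
  move: Hp; rewrite -cats1 steps_cat mem_cat => /orP [/mem_steps [] //|].
  by rewrite /= inE => /eqP -> /=; apply: mem_last.
have Np1 : p.1 \notin c by apply: (allP Al); apply: Hsub.
have HpW : p \in steps (W i) by rewrite EW; apply: steps_infix.
rewrite /Rrel; case: eqP => //= ne; rewrite /fadj inE; apply/andP; split.
  exact: notin_pedges.
rewrite inE /trav -has_count; apply/hasP; exists p => //.
by rewrite /edge_of eqxx andbT; apply/eqP.
Qed.

Lemma Ret_walk n : forall l p, size l <= n -> p \in c -> path (fadj F) p l ->
  last p l \in c -> last p l = p.
Proof.
elim: n => [|n IH] [|z l] p //= Hn Hp /andP [Fpz Pl] Hlast.
have [epz _ _ Npz] := L6 Fpz.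
have Nz : z \notin c.
  apply/negP => Hz.
  have Kpz : connect (G p z) p z.
    apply: connect_trans (_ : connect _ p (s i)) _; last by apply: (L1 Npz).
    by rewrite Gsym; apply: (L1 Npz).
  have Cpz : cr p z (p, z) by rewrite /cr eqxx.
  by move: (nobypass esym eirr eacyc epz Cpz); rewrite Kpz.
have Hl' : has (fun y => y \in c) l.
  apply/hasP; exists (last z l) => //.
  move: (mem_last z l); rewrite inE => /orP [/eqP Ez|//].
  by move: Nz; rewrite -Ez Hlast.
have [o1 [d [o3 [El Hd No]]]] := find_first Hl'.
move: Pl Hlast Hn; rewrite El path_split => /and3P [P1 S1 P3].
rewrite last_cat /= => Hlast Hn.
have Ps1 : path srel z o1.
  by apply: sub_path P1 => x y /L6 [exy _ _ _]; apply: e_srel.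
have Ss1 : srel (last z o1) d by have [exy _ _ _] := L6 S1; apply: e_srel.
have A1 : all (fun y => y \notin c) o1 by rewrite all_predC.
have [Edp _] := Ret Hp Nz epz Ps1 A1 Hd Ss1.
subst d.
apply: IH => //.
move: Hn; rewrite ltnS size_cat /= addnS => Hn.
by apply: leq_trans Hn; apply: ltnW; rewrite ltnS leq_addl.
Qed.

Lemma fverts_W x : x \in fverts F -> x \in W i.
Proof.
case/bigcupP => E; rewrite in_setD => /andP [_ Hw] HxE.
move: Hw; rewrite inE /trav -has_count => /hasP [p Hp /andP [_ /eqP HEp]].
have [H1 H2] := mem_steps Hp.
by move: HxE; rewrite -HEp /edge_of in_set2 => /orP [/eqP ->|/eqP ->].
Qed.

Lemma fpath_W x l : path (fadj F) x l -> x \in W i -> last x l \in W i.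
Proof.
elim: l x => [|y l IH] x //= /andP [Fxy Pl] _.
apply: IH => //; by have [_ _ ? _] := L6 Fxy.
Qed.

Lemma Psub : {subset c <= W i}.
Proof.
move=> z; rewrite inE => /orP [/eqP ->|Hz].
  by have [Ew _] := Wi i; rewrite Ew mem_head.
have [p Hp Ep] := mem_cons_steps (s i) Hz.
by have [_ H2] := mem_steps (Hs Hp); rewrite -Ep.
Qed.

End Robot.
Unset Default Proof Using.

Lemma fadj_sym (F : {set {set V}}) : symmetric (fadj F).
Proof. by move=> a b; rewrite /fadj setUC. Qed.

Lemma main_res : exists (P : 'I_k -> seq V) (F : 'I_k -> {set {set V}}),
    let PV := \bigcup_(r < k) [set v in P r] in
    (forall i : 'I_k,
      [/\ is_tpath e (P i) /\ {subset P i <= W i},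
          wedges (W i) = pedges (P i) :|: F i /\ pedges (P i) :&: F i = set0,
          (forall E, E \in pedges (P i) -> trav (W i) E = 1),
          (forall E, E \in F i ->
             trav (W i) E = 2 /\ (forall j : 'I_k, j != i -> trav (W j) E = 0)) &
          (forall x, x \in fverts (F i) -> #|fcomp (F i) x :&: PV| = 1)])
    /\
    (forall j l : 'I_k, j != l -> fverts (F j) :&: fverts (F l) \subset PV).
Proof.
have HQ : forall i, exists q, [/\ path e (s i) q, uniq (s i :: q),
    last (s i) q = last (s i) (behead (W i)) & {subset steps (s i :: q) <= steps (W i)}].
  move=> i; have [Ew Pw] := Wi i; have [q [H1 H2 H3 H4]] := L_short Pw.
  by exists q; split => // p /H4; rewrite -Ew.
have [Q HQ'] := fin_all_exists HQ.
exists (fun i => s i :: Q i), (fun i => wedges (W i) :\: pedges (s i :: Q i)).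
move=> PV.
have inPV : forall (m : 'I_k) v, v \in s m :: Q m -> v \in PV.
  by move=> m v Hv; apply/bigcupP; exists m => //; rewrite inE.
split.
  move=> i; have [Hq Hu Hl Hs] := HQ' i.
  split.
  - split; first by rewrite /is_tpath Hu Hq.
    exact: Psub Hq Hu Hl Hs.
  - split.
      apply/setP => E; rewrite in_setU in_setD.
      case HE: (E \in pedges _) => //=.
      by rewrite inE (L3 Hq Hu Hl Hs HE).
    by apply/setP => E; rewrite in_setI in_setD in_set0; case: (E \in pedges _).
  - by move=> E HE; apply: (L3 Hq Hu Hl Hs HE).
  - move=> E; rewrite in_setD => /andP [HnP Hw]; split.
      have [a [b [-> eab Hc _]]] := L4 Hq Hu Hl Hs Hw HnP.
      by rewrite trav_cr ?(e_neq eirr eab).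
    by move=> j ji; apply: (L5 Hq Hu Hl Hs Hw HnP ji).
  move=> x Hx.
  have Hxw := fverts_W Hq Hu Hl Hs Hx.
  have [p0 Hp0 Kp0] : exists2 p0, p0 \in s i :: Q i &
      connect (fadj (wedges (W i) :\: pedges (s i :: Q i))) x p0.
    case: (boolP (x \in s i :: Q i)) => Hxc; first by exists x => //; apply: connect0.
    by case: (cex Hq Hu Hl Hs Hxw Hxc) => p H1 H2; exists p.
  suff -> : fcomp (wedges (W i) :\: pedges (s i :: Q i)) x :&: PV = [set p0] by rewrite cards1.
  apply/setP => y; rewrite in_setI in_set1 /fcomp inE.
  apply/andP/eqP => [[Kxy HyPV]|->]; last by split => //; apply: inPV Hp0.
  have Hyw : y \in W i.
    by case/connectP: Kxy => l Pl ->; apply: (fpath_W Hq Hu Hl Hs Pl).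
  have Hyc : y \in s i :: Q i.
    case/bigcupP: HyPV => m _; rewrite inE => Hyr.
    case: (eqVneq m i) => [Eri|nri]; first by rewrite -Eri.
    apply/negPn/negP => Nyc.
    have [Hq' Hu' Hl' Hs'] := HQ' m.
    exact: (K Hq Hu Hl Hs Hyw Nyc nri (Psub Hq' Hu' Hl' Hs' Hyr)).
  have Kpy : connect (fadj (wedges (W i) :\: pedges (s i :: Q i))) p0 y.
    apply: connect_trans _ Kxy.
    by rewrite (sym_connect_sym (fadj_sym _)).
  case/connectP: Kpy => l Pl El.
  by rewrite El; apply: (Ret_walk Hq Hu Hl Hs (leqnn (size l)) Hp0 Pl); rewrite -El.
move=> j l jl; apply/subsetP => v; rewrite in_setI => /andP [Hj Hl'].
have [Hq Hu Hl Hs] := HQ' j.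
have [Hq2 Hu2 Hl2 Hs2] := HQ' l.
have Hvj := fverts_W Hq Hu Hl Hs Hj.
have Hvl := fverts_W Hq2 Hu2 Hl2 Hs2 Hl'.
case: (boolP (v \in s j :: Q j)) => Hvc; first exact: inPV Hvc.
by exfalso; apply: (K Hq Hu Hl Hs Hvj Hvc _ Hvl); rewrite eq_sym.
Qed.

End Main.

Theorem lemma1 (V : finType) (e : rel V) (k : nat) (s : 'I_k -> V)
  (W : 'I_k -> seq V) :
  is_tree e -> 0 < k ->
  is_strategy e s W -> covering W ->
  (forall W' : 'I_k -> seq V, is_strategy e s W' -> covering W' ->
     slen W <= slen W') ->
  exists (P : 'I_k -> seq V) (F : 'I_k -> {set {set V}}),
    let PV := \bigcup_(r < k) [set v in P r] in
    (forall i : 'I_k,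
      [/\ is_tpath e (P i) /\ {subset P i <= W i},
          wedges (W i) = pedges (P i) :|: F i /\ pedges (P i) :&: F i = set0,
          (* (a) *)
          (forall E, E \in pedges (P i) -> trav (W i) E = 1),
          (* (b) *)
          (forall E, E \in F i ->
             trav (W i) E = 2 /\ (forall j : 'I_k, j != i -> trav (W j) E = 0)) &
          (* (c) *)
          (forall x, x \in fverts (F i) -> #|fcomp (F i) x :&: PV| = 1)])
    /\
    (* (d) *)
    (forall j l : 'I_k, j != l -> fverts (F j) :&: fverts (F l) \subset PV).
Proof.
move=> [esym eirr _ eacyc] _ Hstr Hcov Hmin.
by eapply main_res; eassumption.
Qed.
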